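(* For all $w_1\in\mathcal{H}^0$ and $w_2\in\mathcal{H}^{\ge2}$, $Z^\diamondsuit(w_1*w_2)=Z^\diamondsuit(w_1)Z^\diamondsuit(w_2)$ (termwise product in $\mathbb{Q}^{\mathbb{N}}$).
   Context: $[n]=\{1,\dots,n\}$. For $N\ge1$ and an admissible index (tuple of positive integers, nonempty, last entry $\ge2$) $\boldsymbol{k}=(k_1,\dots,k_r)$: $[r]^1_{\boldsymbol{k}}=\{i:k_i=1\}$, $S_{r,N}(A)=\{(n_1,\dots,n_r)\in[N-1]^r: n_i\le n_{i+1}\ (i\in A),\ n_i<n_{i+1}\ (i\in[r-1]\setminus A)\}$, $\zeta^\diamondsuit_N(\boldsymbol{k})=\sum_{A\subset[r]^1_{\boldsymbol{k}}}\sum_{S_{r,N}(A)}\prod_{i\in A}(N-n_i)^{-1}\prod_{i\notin A}n_i^{-k_i}$, $\zeta^\diamondsuit(\boldsymbol{k})=(\zeta^\diamondsuit_N(\boldsymbol{k}))_{N\ge1}$. $\mathcal{H}=\mathbb{Q}\langle x,y\rangle$, $\mathcal{H}^1=\mathbb{Q}+y\mathcal{H}$, $\mathcal{H}^0=\mathbb{Q}+y\mathcal{H}x$, $\mathcal{H}^{\ge2}=\mathbb{Q}+yx\,\mathbb{Q}\langle x,yx\rangle$, $e_k=yx^{k-1}$; $Z^\diamondsuit\colon\mathcal{H}^0\to\mathbb{Q}^{\mathbb{N}}$ is $\mathbb{Q}$-linear with $Z^\diamondsuit(1)=(1)_N$, $Z^\diamondsuit(e_{k_1}\cdots e_{k_r})=\zeta^\diamondsuit(k_1,\dots,k_r)$.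 Harmonic product $*$ on $\mathcal{H}^1$: $\mathbb{Q}$-bilinear, $w*1=1*w=w$, $w_1e_{k_1}*w_2e_{k_2}=(w_1*w_2e_{k_2})e_{k_1}+(w_1e_{k_1}*w_2)e_{k_2}+(w_1*w_2)e_{k_1+k_2}$ for words $w_1,w_2$. *)

(* Defs.v *)
From mathcomp Require Import all_boot all_order all_algebra.
Set Implicit Arguments. Unset Strict Implicit. Unset Printing Implicit Defensive.
Import Order.TTheory GRing.Theory Num.Theory.
Local Open Scope ring_scope.

(* An index (k_1,...,k_r) is a seq nat; it encodes the word e_{k_1}...e_{k_r}
   of H^1 (every word of H^1 is uniquely such a product with all k_i >= 1). *)

(* zeta^diamond_N(k), indices 0-based: i in 'I_r stands for i+1. *)
Definition zetaD (k : seq nat) (N : nat) : rat :=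
  let r := size k in
  \sum_(A : {set 'I_r} | A \subset [set i : 'I_r | nth 0%N k i == 1%N])
   \sum_(n : {ffun 'I_r -> 'I_N} |
          [forall i, (0 < n i)%N] &&
          [forall i : 'I_r, forall j : 'I_r,
             (val j == (val i).+1) ==>
             (if i \in A then (n i <= n j)%N else (n i < n j)%N)])
     ((\prod_(i in A) ((N - n i)%:R)^-1) *
      (\prod_(i | i \notin A) (((n i)%:R) ^+ (nth 0%N k i))^-1)).

Definition zetaDseq (k : seq nat) : nat -> rat := fun N => zetaD k N.

(* Harmonic product of words, on reversed words (head = last letter):
   u = k1 :: u', v = k2 :: v' encode w1 e_{k1}, w2 e_{k2}. *)
Fixpoint hrev (u v : seq nat) {struct u} : seq (seq nat) :=
  match u with
  | [::] => [:: v]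
  | a :: u' =>
    let fix aux (v : seq nat) : seq (seq nat) :=
      match v with
      | [::] => [:: u]
      | b :: v' =>
          [seq a :: w | w <- hrev u' v] ++ [seq b :: w | w <- aux v']
          ++ [seq (a + b)%N :: w | w <- hrev u' v']
      end in aux v
  end.

(* harmonic product of two words: the list of words (with multiplicity)
   whose sum is u * v. *)
Definition harm_word (u v : seq nat) : seq (seq nat) :=
  [seq rev w | w <- hrev (rev u) (rev v)].

(* Elements of H^1 as formal Q-linear combinations of words. *)
Definition lc := seq (rat * seq nat).

Definition harm (w1 w2 : lc) : lc :=
  flatten [seq [seq (p.1 * q.1, w) | w <- harm_word p.2 q.2] | p <- w1, q <- w2].

Definition ZD (w : lc) : nat -> rat :=
  fun N => \sum_(p <- w) p.1 * zetaDseq p.2 N.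

Definition word_H0 (s : seq nat) : bool :=
  (s == [::]) || (all (fun k => 0 < k)%N s && (2 <= last 0%N s)%N).
(* word in H^{>=2} = Q + yx Q<x,yx>: all k_i >= 2. *)
Definition word_H2 (s : seq nat) : bool := all (fun k => 2 <= k)%N s.

Definition in_H0 (w : lc) : bool := all (fun p => word_H0 p.2) w.
Definition in_H2 (w : lc) : bool := all (fun p => word_H2 p.2) w.

(* Main.v *)
Require Import Defs.
From Stdlib Require Import FunctionalExtensionality.
From mathcomp Require Import all_boot all_order all_algebra zify ring.
Set Implicit Arguments. Unset Strict Implicit. Unset Printing Implicit Defensive.
Import Order.TTheory GRing.Theory Num.Theory.
Local Open Scope ring_scope.

Definition extf (T : Type) r (g : {ffun 'I_r -> T}) (x : T) : {ffun 'I_r.+1 -> T} :=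
  [ffun i => if unlift ord_max i is Some j then g j else x].
Definition exts r (A : {set 'I_r}) (b : bool) : {set 'I_r.+1} :=
  [set i | if unlift ord_max i is Some j then j \in A else b].

Lemma extfL T r (g : {ffun 'I_r -> T}) x j : extf g x (lift ord_max j) = g j.
Proof. by rewrite ffunE liftK. Qed.
Lemma extfM T r (g : {ffun 'I_r -> T}) x : extf g x ord_max = x.
Proof. by rewrite ffunE unlift_none. Qed.
Lemma extsL r (A : {set 'I_r}) b j : (lift ord_max j \in exts A b) = (j \in A).
Proof. by rewrite inE liftK. Qed.
Lemma extsM r (A : {set 'I_r}) b : (ord_max \in exts A b) = b.
Proof. by rewrite inE unlift_none. Qed.

Lemma sum_ffunS (T : finType) r (F : {ffun 'I_r.+1 -> T} -> rat) :
  \sum_g F g = \sum_(x : T) \sum_(g : {ffun 'I_r -> T}) F (extf g x).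
Proof.
rewrite pair_big /= (reindex (fun p : T * {ffun 'I_r -> T} => extf p.2 p.1)) //.
exists (fun g : {ffun 'I_r.+1 -> T} => (g ord_max, [ffun j : 'I_r => g (lift ord_max j)])) => [[x g] _ | g _] /=.
  by rewrite extfM; congr pair; apply/ffunP => j; rewrite ffunE extfL.
apply/ffunP => i; rewrite ffunE; case: unliftP => [j ->|->] //.
by rewrite ffunE.
Qed.

Lemma sum_setS r (F : {set 'I_r.+1} -> rat) :
  \sum_A F A = \sum_(b : bool) \sum_(A : {set 'I_r}) F (exts A b).
Proof.
rewrite pair_big /= (reindex (fun p : bool * {set 'I_r} => exts p.2 p.1)) //.
exists (fun A : {set 'I_r.+1} => (ord_max \in A, [set j : 'I_r | lift ord_max j \in A])) => [[b A] _ | A _] /=.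
  by rewrite extsM; congr pair; apply/setP => j; rewrite inE extsL.
apply/setP => i; rewrite inE; case: unliftP => [j ->|->] //.
by rewrite inE.
Qed.

Lemma forallS r (P : pred 'I_r.+1) :
  [forall i, P i] = [forall j : 'I_r, P (lift ord_max j)] && P ord_max.
Proof.
apply/forallP/andP => [H|[/forallP H1 H2] i]; first by split; [apply/forallP=> j|]; apply: H.
by case: (unliftP ord_max i) => [j ->|->].
Qed.

Lemma prodS r (P : pred 'I_r.+1) (F : 'I_r.+1 -> rat) :
  \prod_(i | P i) F i =
  (\prod_(j | P (lift ord_max j)) F (lift ord_max j)) * (if P ord_max then F ord_max else 1).
Proof.
rewrite big_mkcond big_ord_recr /= [in RHS]big_mkcond; congr (_ * _).
apply: eq_bigr => j _; have -> // : widen_ord (leqnSn r) j = lift ord_max j.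
by apply: val_inj => /=; rewrite /bump leqNgt ltn_ord.
Qed.

Definition chainc N r (A : {set 'I_r}) (n : {ffun 'I_r -> 'I_N}) : bool :=
  [forall i : 'I_r, forall j : 'I_r,
     (val j == (val i).+1) ==>
     (if i \in A then (n i <= n j)%N else (n i < n j)%N)].
Definition lastc N r (A : {set 'I_r}) (n : {ffun 'I_r -> 'I_N}) (m : nat) : bool :=
  [forall i : 'I_r, (val i == r.-1) ==> (if i \in A then (n i <= m)%N else (n i < m)%N)].
Definition Wt N r (f : nat -> nat) (A : {set 'I_r}) (n : {ffun 'I_r -> 'I_N}) : rat :=
  (\prod_(i in A) ((N - n i)%:R)^-1) * (\prod_(i | i \notin A) (((n i)%:R) ^+ (f i))^-1).
Definition zD N r (f : nat -> nat) (m : nat) : rat :=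
  \sum_(A : {set 'I_r} | A \subset [set i : 'I_r | f i == 1%N])
   \sum_(n : {ffun 'I_r -> 'I_N} | [forall i, (0 < n i)%N] && chainc A n && lastc A n m)
     @Wt N r f A n.

Lemma bumpr r (j : 'I_r) : bump r j = j.
Proof. by rewrite /bump leqNgt ltn_ord. Qed.

Lemma L1 r (f : nat -> nat) (A : {set 'I_r}) b :
  (exts A b \subset [set i : 'I_r.+1 | f i == 1%N]) =
  (A \subset [set i : 'I_r | f i == 1%N]) && (b ==> (f r == 1%N)).
Proof.
apply/subsetP/andP => [H|[/subsetP H1 /implyP H2] i].
  split; last by apply/implyP => hb; have := H ord_max; rewrite extsM inE /=; apply.
  apply/subsetP => j hj; have := H (lift ord_max j); rewrite extsL inE lift_max inE.
  by apply.
case: (unliftP ord_max i) => [j ->|->]; rewrite ?extsL ?extsM inE ?lift_max => h.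
  by have := H1 j h; rewrite inE.
exact: H2.
Qed.

Lemma L2 N r (n : {ffun 'I_r -> 'I_N}) x :
  [forall i, (0 < extf n x i)%N] = [forall i, (0 < n i)%N] && (0 < x)%N.
Proof.
rewrite forallS extfM; congr andb; apply: eq_forallb => j; by rewrite extfL.
Qed.

Lemma L3 N r (A : {set 'I_r}) b (n : {ffun 'I_r -> 'I_N}) x :
  chainc (exts A b) (extf n x) = chainc A n && lastc A n x.
Proof.
apply/idP/andP.
  move/forallP => H; split.
    apply/forallP => i; apply/forallP => j; have := forallP (H (lift ord_max i)) (lift ord_max j) => /=.
    by rewrite !extfL !extsL !bumpr.
  apply/forallP => i; apply/implyP => /eqP hi.
  have := forallP (H (lift ord_max i)) ord_max.
  rewrite extfL extsL extfM /= bumpr.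
  have -> : (r == i.+1) by apply/eqP; move: hi; rewrite /=; have := ltn_ord i; lia.
  done.
case=> /forallP H1 /forallP H2; apply/forallP => i; apply/forallP => j.
case: (unliftP ord_max i) => [i' ->|->]; case: (unliftP ord_max j) => [j' ->|->];
  rewrite ?extfL ?extsL ?extfM ?extsM /= ?bumpr.
- exact: (forallP (H1 i') j').
- apply/implyP => /eqP hij; have := H2 i'.
  move: hij; rewrite /= => hij.
  have e : r.-1 = i' by rewrite [in RHS](_ : nat_of_ord i' = (nat_of_ord i').+1.-1) // -hij.
  by rewrite e eqxx.
- apply/implyP => /eqP; have hj := ltn_ord j'; simpl in hj; lia.
- by apply/implyP => /eqP; lia.
Qed.

Lemma L4 N r (A : {set 'I_r}) b (n : {ffun 'I_r -> 'I_N}) x m :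
  lastc (exts A b) (extf n x) m = if b then (x <= m)%N else (x < m)%N.
Proof.
rewrite /lastc forallS extfM extsM /= eqxx /=.
rewrite (_ : [forall j, _] = true) //; apply/forallP => j.
by rewrite /= bumpr (ltn_eqF (ltn_ord j)).
Qed.

Lemma L5 N r f (A : {set 'I_r}) b (n : {ffun 'I_r -> 'I_N}) (x : 'I_N) :
  Wt f (exts A b) (extf n x) =
  Wt f A n * (if b then ((N - x)%:R)^-1 else ((x%:R) ^+ f r)^-1).
Proof.
rewrite /Wt (prodS (fun i => i \in exts A b)) (prodS (fun i => i \notin exts A b)).
rewrite extsM extfM.
rewrite mulrACA; congr (_ * _); last by case: b; rewrite /= ?mulr1 ?mul1r.
by congr (_ * _); apply: eq_big => [j|j _]; rewrite ?extsL ?extfL /= ?bumpr.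
Qed.
Lemma zD_S N r f m : zD N r.+1 f m =
  \sum_(x : 'I_N | (0 < x)%N && (x < m)%N) (((x%:R) ^+ f r)^-1 * zD N r f x) +
  (f r == 1%N)%:R * \sum_(x : 'I_N | (0 < x)%N && (x <= m)%N) (((N - x)%:R)^-1 * zD N r f x).
Proof.
rewrite {1}/zD big_mkcond sum_setS big_bool /= addrC.
under eq_bigr => A _ do rewrite L1.
under [X in _ + X]eq_bigr => A _ do rewrite L1.
congr (_ + _).
  under eq_bigr => A _ do rewrite implyFb andbT.
  rewrite -big_mkcond /=.
  under eq_bigr => A _ do rewrite big_mkcond sum_ffunS.
  under eq_bigr => A _ do under eq_bigr => x _ do under eq_bigr => n _ do rewrite L2 L3 L4 L5.
  rewrite exchange_big /= [RHS]big_mkcond; apply: eq_bigr => x _.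
  case hx: ((0 < x)%N && (x < m)%N).
    rewrite /zD mulr_sumr; apply: eq_bigr => A _; rewrite mulr_sumr [RHS]big_mkcond.
    apply: eq_bigr => n _; move/andP: hx => [h0 h1]; rewrite h0 h1 !andbT andbA.
    by case: ifP => _ //; rewrite mulrC.
  rewrite big1 // => A _; rewrite big1 // => n _.
  case: ifP => // /andP [/andP [/andP [_ h1] _] h2]; by rewrite h1 h2 in hx.
under eq_bigr => A _ do rewrite implyTb.
case hf: (f r == 1%N); last first.
  by rewrite mul0r big1 // => A _; rewrite andbF.
rewrite mul1r.
under eq_bigr => A _ do rewrite andbT.
rewrite -big_mkcond /=.
under eq_bigr => A _ do rewrite big_mkcond sum_ffunS.
under eq_bigr => A _ do under eq_bigr => x _ do under eq_bigr => n _ do rewrite L2 L3 L4 L5.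
rewrite exchange_big /= [RHS]big_mkcond; apply: eq_bigr => x _.
case hx: ((0 < x)%N && (x <= m)%N).
  rewrite /zD mulr_sumr; apply: eq_bigr => A _; rewrite mulr_sumr [RHS]big_mkcond.
  apply: eq_bigr => n _; move/andP: hx => [h0 h1]; rewrite h0 h1 !andbT andbA.
  by case: ifP => _ //; rewrite mulrC.
rewrite big1 // => A _; rewrite big1 // => n _.
case: ifP => // /andP [/andP [/andP [_ h1] _] h2]; by rewrite h1 h2 in hx.
Qed.

Lemma zD0 N f m : zD N 0 f m = 1.
Proof.
rewrite /zD (bigD1 set0) ?sub0set //=.
rewrite [X in _ + X]big1 ?addr0; last first.
  by move=> A /andP [_ /negP []]; apply/eqP; apply/setP => -[].
rewrite (bigD1 (ffun0 (card_ord 0))) /=; last first.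
  by apply/andP; split; [apply/andP; split|]; apply/forallP => -[].
rewrite [X in _ + X]big1 ?addr0; last first.
  by move=> g /andP [_ /negP []]; apply/eqP/ffunP => -[].
by rewrite /Wt !big_pred0 ?mulr1 // => -[].
Qed.

Lemma zD_ext N r f g m : (forall i, (i < r)%N -> f i = g i) -> zD N r f m = zD N r g m.
Proof.
move=> H; rewrite /zD; apply: eq_big => [A|A _].
  by rewrite (_ : [set i : 'I_r | f i == 1%N] = [set i : 'I_r | g i == 1%N]) //;
    apply/setP => i; rewrite !inE H.
apply: eq_bigr => n _; rewrite /Wt; congr (_ * _); apply: eq_bigr => i _.
by rewrite H.
Qed.

Fixpoint Gr N (u : seq nat) (m : nat) : rat :=
  match u with
  | [::] => 1
  | a :: u' =>
    \sum_(x : 'I_N | (0 < x)%N && (x < m)%N) (((x%:R) ^+ a)^-1 * Gr N u' x) +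
    (a == 1%N)%:R * \sum_(x : 'I_N | (0 < x)%N && (x <= m)%N) (((N - x)%:R)^-1 * Gr N u' x)
  end.

Lemma zD_Gr N k m : zD N (size k) (nth 0%N k) m = Gr N (rev k) m.
Proof.
elim/last_ind: k m => [|k a IH] m; first by rewrite zD0.
rewrite size_rcons zD_S rev_rcons /= nth_rcons ltnn eqxx.
have E : forall x, zD N (size k) (nth 0%N (rcons k a)) x = Gr N (rev k) x.
  by move=> x; rewrite -IH; apply: zD_ext => i hi; rewrite nth_rcons hi.
by congr (_ + _ * _); apply: eq_bigr => x _; rewrite E.
Qed.

Lemma zetaD_Gr k N : zetaD k N = Gr N (rev k) N.
Proof.
rewrite -zD_Gr /zetaD /zD /=; apply: eq_bigr => A _; apply: eq_bigl => n.
rewrite (_ : lastc A n N = true) ?andbT //.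
by apply/forallP => i; apply/implyP => _; case: ifP => _ //; exact: ltnW.
Qed.

Lemma GrB N b v : (2 <= b)%N ->
  Gr N (b :: v) = fun m => \sum_(x : 'I_N | (0 < x)%N && (x < m)%N) (((x%:R) ^+ b)^-1 * Gr N v x).
Proof.
move=> hb; apply: functional_extensionality => m /=.
by rewrite (_ : (b == 1%N) = false) ?mul0r ?addr0 //; apply/negbTE; case: b hb => [|[]].
Qed.
Lemma T1 N (P : pred 'I_N) (Q : 'I_N -> pred 'I_N) (F : 'I_N -> 'I_N -> rat) :
  \sum_(x | P x) \sum_(y | Q x y) F x y = \sum_x \sum_y ((P x && Q x y)%:R * F x y).
Proof.
rewrite big_mkcond; apply: eq_bigr => x _; case: (P x) => /=.
  by rewrite big_mkcond; apply: eq_bigr => y _; case: (Q x y); rewrite /= ?mul1r ?mul0r.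
by rewrite big1 // => y _; rewrite mul0r.
Qed.

Lemma G1 N (P Q : pred 'I_N) (F K : 'I_N -> rat) :
  (\sum_(x | P x) F x) * (\sum_(y | Q y) K y) = \sum_x \sum_y ((P x && Q y)%:R * (F x * K y)).
Proof. by rewrite big_distrlr /= T1. Qed.

Lemma G2 N (P : pred 'I_N) (Q : 'I_N -> pred 'I_N) (A G K : 'I_N -> rat) :
  \sum_(x | P x) (A x * (G x * \sum_(y | Q x y) K y)) =
  \sum_x \sum_y ((P x && Q x y)%:R * (A x * G x * K y)).
Proof.
rewrite -T1; apply: eq_bigr => x _; by rewrite mulrA mulr_sumr.
Qed.

Lemma cS N (c : rat) (F : 'I_N -> 'I_N -> rat) :
  c * \sum_x \sum_y F x y = \sum_x \sum_y (c * F x y).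
Proof. by rewrite mulr_sumr; apply: eq_bigr => x _; rewrite mulr_sumr. Qed.

Lemma G3 N (P : pred 'I_N) (Q Q' : 'I_N -> pred 'I_N) (B H F F' : 'I_N -> rat) (c : rat) :
  \sum_(y | P y) (B y * ((\sum_(x | Q y x) F x + c * \sum_(x | Q' y x) F' x) * H y)) =
  \sum_x \sum_y ((P y && Q y x)%:R * (F x * (B y * H y))) +
  \sum_x \sum_y (c * ((P y && Q' y x)%:R * (F' x * (B y * H y)))).
Proof.
rewrite -cS [X in X + _]exchange_big [X in _ * X]exchange_big /= -!T1.
rewrite mulr_sumr -big_split /=; apply: eq_bigr => y _.
rewrite mulrDl mulrDr !mulr_suml !mulr_sumr; congr (_ + _).
  by rewrite (eq_bigr (fun x => F x * (B y * H y))) // => x _; ring.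
rewrite mulr_suml mulr_sumr.
by rewrite (eq_bigr (fun x => c * (F' x * (B y * H y)))) // => x _; ring.
Qed.

Lemma G4 N (P : pred 'I_N) (F : 'I_N -> 'I_N -> rat) :
  \sum_(x | P x) F x x = \sum_x \sum_y ((P x && (y == x))%:R * F x y).
Proof.
rewrite -T1; apply: eq_bigr => x _; by rewrite big_pred1_eq.
Qed.

Lemma nb1 : (((true : nat)%:R) : rat) = 1. Proof. by []. Qed.
Lemma nb0 : (((false : nat)%:R) : rat) = 0. Proof. by []. Qed.

Lemma dsum N (A G D B H E : 'I_N -> rat) (c : rat) (m : nat) :
  (forall x, E x = A x * B x) ->
  ((\sum_(x : 'I_N | (0 < x)%N && (x < m)%N) (A x * G x)) +
    c * \sum_(x : 'I_N | (0 < x)%N && (x <= m)%N) (D x * G x)) *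
  \sum_(y : 'I_N | (0 < y)%N && (y < m)%N) (B y * H y)
  = (\sum_(x : 'I_N | (0 < x)%N && (x < m)%N)
        (A x * (G x * \sum_(y : 'I_N | (0 < y)%N && (y < x)%N) (B y * H y))) +
     c * \sum_(x : 'I_N | (0 < x)%N && (x <= m)%N)
        (D x * (G x * \sum_(y : 'I_N | (0 < y)%N && (y < x)%N) (B y * H y))))
  + (\sum_(y : 'I_N | (0 < y)%N && (y < m)%N)
        (B y * ((\sum_(x : 'I_N | (0 < x)%N && (x < y)%N) (A x * G x) +
                c * \sum_(x : 'I_N | (0 < x)%N && (x <= y)%N) (D x * G x)) * H y))
    + \sum_(x : 'I_N | (0 < x)%N && (x < m)%N) (E x * (G x * H x))).
Proof.
move=> hE.
have e4 : \sum_(x : 'I_N | (0 < x)%N && (x < m)%N) (E x * (G x * H x)) =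
  \sum_(x : 'I_N) \sum_(y : 'I_N) ((((0 < x)%N && (x < m)%N) && (y == x))%:R * (A x * G x * (B y * H y))).
  rewrite -(G4 _ (fun x y => A x * G x * (B y * H y))).
  by apply: eq_bigr => x _; rewrite hE; ring.
rewrite e4 mulrDl -mulrA !G1 cS !G2 cS G3.
rewrite -!big_split /=; apply: eq_bigr => x _.
rewrite -!big_split /=; apply: eq_bigr => y _.
move: (A x * G x * _) (D x * G x * _) => p q.
case: (eqVneq y x) => [->|hne].
  rewrite ltnn !andbF.
  by case: (ltngtP x m) => h; case: (0 < x)%N; rewrite /= ?leqnn ?nb1 ?nb0; ring.
rewrite andbF.
have hn : (x : nat) != y by apply: contra hne => /eqP/val_inj ->.
case: (ltngtP x y) => hxy; last by rewrite hxy eqxx in hn.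
  by case: (ltngtP x m) => h1; case: (ltngtP y m) => h2; case: (0 < x)%N; case: (0 < y)%N;
     rewrite /= ?nb1 ?nb0; try ring; exfalso; lia.
by case: (ltngtP x m) => h1; case: (ltngtP y m) => h2; case: (0 < x)%N; case: (0 < y)%N;
   rewrite /= ?nb1 ?nb0; try ring; exfalso; lia.
Qed.

Lemma hrev_cons a u b v : hrev (a :: u) (b :: v) =
  [seq a :: w | w <- hrev u (b :: v)] ++ [seq b :: w | w <- hrev (a :: u) v] ++
  [seq (a + b)%N :: w | w <- hrev u v].
Proof. by []. Qed.

Lemma GrS_sum N a (s : seq (seq nat)) m :
  \sum_(w <- s) Gr N (a :: w) m =
  \sum_(x : 'I_N | (0 < x)%N && (x < m)%N) (((x%:R) ^+ a)^-1 * \sum_(w <- s) Gr N w x) +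
  (a == 1%N)%:R * \sum_(x : 'I_N | (0 < x)%N && (x <= m)%N) (((N - x)%:R)^-1 * \sum_(w <- s) Gr N w x).
Proof.
rewrite /= big_split /=; congr (_ + _).
  by rewrite exchange_big; apply: eq_bigr => x _; rewrite mulr_sumr.
rewrite -mulr_sumr exchange_big; congr (_ * _); apply: eq_bigr => x _.
by rewrite mulr_sumr.
Qed.

Lemma GrB_sum N b (s : seq (seq nat)) m : (2 <= b)%N ->
  \sum_(w <- s) Gr N (b :: w) m =
  \sum_(x : 'I_N | (0 < x)%N && (x < m)%N) (((x%:R) ^+ b)^-1 * \sum_(w <- s) Gr N w x).
Proof.
move=> hb; rewrite GrS_sum (_ : (b == 1%N) = false) ?mul0r ?addr0 //.
by apply/negbTE; case: b hb => [|[]].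
Qed.

Lemma GrS_sumF N a (s : seq (seq nat)) m (F : nat -> rat) :
  (forall x, \sum_(w <- s) Gr N w x = F x) ->
  \sum_(w <- s) Gr N (a :: w) m =
  \sum_(x : 'I_N | (0 < x)%N && (x < m)%N) (((x%:R) ^+ a)^-1 * F x) +
  (a == 1%N)%:R * \sum_(x : 'I_N | (0 < x)%N && (x <= m)%N) (((N - x)%:R)^-1 * F x).
Proof.
by move=> HF; rewrite GrS_sum; congr (_ + _ * _); apply: eq_bigr => x _; rewrite HF.
Qed.

Lemma GrB_sumF N b (s : seq (seq nat)) m (F : nat -> rat) : (2 <= b)%N ->
  (forall x, \sum_(w <- s) Gr N w x = F x) ->
  \sum_(w <- s) Gr N (b :: w) m =
  \sum_(x : 'I_N | (0 < x)%N && (x < m)%N) (((x%:R) ^+ b)^-1 * F x).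
Proof.
by move=> hb HF; rewrite GrB_sum //; apply: eq_bigr => x _; rewrite HF.
Qed.

Lemma stuffle N u : forall v, all (fun k => 2 <= k)%N v -> forall m,
  Gr N u m * Gr N v m = \sum_(w <- hrev u v) Gr N w m.
Proof.
elim: u => [|a u IHu] v hv m; first by rewrite big_seq1 /= mul1r.
elim: v hv m => [|b v IHv] hv0 m; first by rewrite big_seq1 /= mulr1.
move: (hv0) => /andP [hb hv].
have hab : (2 <= a + b)%N by rewrite (leq_trans hb) // leq_addl.
rewrite hrev_cons !big_cat !big_map.
rewrite (@GrS_sumF N a _ m _ (fun x => esym (IHu (b :: v) hv0 x))).
rewrite (@GrB_sumF N b _ m _ hb (fun x => esym (IHv hv x))).
rewrite (@GrB_sumF N (a + b) _ m _ hab (fun x => esym (IHu v hv x))).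
rewrite (GrB _ _ hb) /=.
apply: (@dsum N (fun x : 'I_N => ((x%:R) ^+ a)^-1) (fun x : 'I_N => Gr N u x)
   (fun x : 'I_N => ((N - x)%:R)^-1) (fun x : 'I_N => ((x%:R) ^+ b)^-1)
   (fun x : 'I_N => Gr N v x) (fun x : 'I_N => ((x%:R) ^+ (a + b))^-1)).
by move=> x; rewrite exprD invfM.
Qed.

Lemma harm_word_zeta N u v : word_H2 v ->
  \sum_(w <- harm_word u v) zetaD w N = zetaD u N * zetaD v N.
Proof.
move=> hv; rewrite /harm_word big_map !zetaD_Gr.
under eq_bigr => w _ do rewrite zetaD_Gr revK.
by rewrite stuffle // all_rev.
Qed.

Theorem mainTheorem10 (w1 w2 : lc) :
  in_H0 w1 -> in_H2 w2 ->
  forall N : nat, (0 < N)%N -> ZD (harm w1 w2) N = ZD w1 N * ZD w2 N.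
Proof.
move=> _ H2 N _.
rewrite /ZD /harm big_flatten /= big_allpairs_dep /= big_distrl /=.
apply: eq_bigr => p _; rewrite mulr_sumr [LHS]big_seq [RHS]big_seq.
apply: eq_bigr => q hq; rewrite big_map /= -mulr_sumr /zetaDseq harm_word_zeta.
  by rewrite mulrACA.
exact: (allP H2 q hq).
Qed.
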